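(* Assume the root datum is $X$-regular and $\phi$ is an enhancer. Let $\lambda,\lambda'\in X^+$, $\Lambda_\lambda=\{\lambda-\nu':\nu\in\mathbb N[I]\}$ and $V_{\lambda'}=\{\nu'-\lambda':\nu\in\mathbb N[I]\}$, and for $\zeta=\lambda-\nu'\in\Lambda_\lambda$ set $p(\zeta)=p(\nu)$. Then there is a function $\varkappa=\varkappa_{\lambda,\lambda'}:\Lambda_\lambda\times V_{\lambda'}\to\mathbb Z$ such that, modulo $4$ and for all $i\in I$, $\zeta\in\Lambda_\lambda$, $\zeta'\in V_{\lambda'}$ (with $\zeta-i'\in\Lambda_\lambda$, $\zeta'+i'\in V_{\lambda'}$ automatically): (1) $\varkappa(\zeta-i',\zeta')\equiv\varkappa(\zeta,\zeta')-\phi(i,\zeta')$; (2) $\varkappa(\zeta,\zeta'+i')\equiv\varkappa(\zeta,\zeta')+\phi(i,\zeta)+2d_i+\langle\tilde i,\zeta+\zeta'\rangle+2p(\zeta)p(i)$; (3) $\varkappa(\lambda,-\lambda')\equiv0$.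
   Context: Setup. $I$ is a finite set with a partition $I=I_{\bar 0}\sqcup I_{\bar 1}$, $I_{\bar 1}\neq\emptyset$; $p(i)=0$ for $i\in I_{\bar0}$ and $p(i)=1$ for $i\in I_{\bar1}$. There is a symmetric $\mathbb Z$-bilinear form $\nu\cdot\nu'$ on $\mathbb Z[I]$ with $d_i:=\frac{i\cdot i}{2}\in\mathbb Z_{>0}$, $a_{ij}:=\frac{2\,i\cdot j}{i\cdot i}\in\mathbb Z_{\le 0}$ for $i\neq j$, $a_{ij}\in2\mathbb Z$ whenever $i\in I_{\bar1}$, and $d_i\equiv p(i)\pmod 2$ (hence $i\cdot j\in2\mathbb Z$). A root datum is fixed: free abelian groups $X,Y$ of finite rank with a perfect pairing $\langle\cdot,\cdot\rangle:Y\times X\to\mathbb Z$, a map $I\to Y$, $i\mapsto i$, with linearly independent image, and a map $I\to X$, $i\mapsto i'$, with $\langle i,j'\rangle=\frac{2\,i\cdot j}{i\cdot i}$. $X$-regular means the image of $i\mapsto i'$ is linearly independent. For $\nu=\sum\nu_i i\in\mathbb Z[I]$: $p(\nu)=\sum\nu_ip(i)\in\mathbb Z/2$ (identified with $\{0,1\}$ in exponents), $\tilde\nu=\sum d_i\nu_ii\in Y$, $\nu'=\sum\nu_ii'\in X$; $\tilde i=d_ii$. $X^+=\{\lambda\in X:\langle i,\lambda\rangle\ge0\ \forall i\}$. An enhancer is a function $\phi:\mathbb Z[I]\times X\to\mathbb Z$ such that, with $\equiv$ denoting congruence mod 4: (a) $\phi(\nu,\lambda+\mu')\equiv\phi(\nu,\mu')+\phi(\nu,\lambda)$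 and $\phi(\nu+\mu,\lambda)\equiv\phi(\nu,\lambda)+\phi(\mu,\lambda)$ for $\nu,\mu\in\mathbb Z[I]$, $\lambda\in X$; (b) $\phi(i,j')\in2\mathbb Z$ for $i\neq j$; (c) $\phi(i,j')-\phi(j,i')\equiv i\cdot j+2p(i)p(j)$ for $i\ne j$ and $\phi(i,i')\equiv d_i$. *)

(* Defs.v *)
From HB Require Import structures.
From mathcomp Require Import all_boot all_order all_algebra.
Set Implicit Arguments. Unset Strict Implicit. Unset Printing Implicit Defensive.
Import GRing.Theory Num.Theory.
Local Open Scope ring_scope.

(* X = Y = 'rV[int]_n with the standard (perfect) qd_pairing <y, x>. *)
Definition qd_pairing (n : nat) (y x : 'rV[int]_n) : int := \sum_(k < n) y 0 k * x 0 k.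

Section Defs.
Variable I : finType.

(* Z[I] is modelled by functions I -> int; N[I] by functions I -> nat. *)
Definition qd_natZ (nu : I -> nat) : I -> int := fun k => (nu k)%:Z.
Definition qd_eI (i : I) : I -> int := fun k => (k == i)%:R.
Definition qd_addZI (nu mu : I -> int) : I -> int := fun k => nu k + mu k.

(* d_i = (i.i)/2 and a_ij = 2 (i.j)/(i.i), where B i j = i.j *)
Definition qd_dI (B : I -> I -> int) (i : I) : int := (B i i %/ 2)%Z.
Definition qd_aI (B : I -> I -> int) (i j : I) : int := ((2 * B i j) %/ B i i)%Z.

(* p(nu) in Z/2, represented by 0 or 1 *)
Definition qd_parZ (p : I -> bool) (nu : I -> int) : int :=
  ((\sum_i nu i * (p i)%:R) %% 2)%Z.

(* nu' = sum nu_i i' *)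
Definition qd_rootX (n : nat) (iX : I -> 'rV[int]_n) (nu : I -> int) : 'rV[int]_n :=
  \sum_i nu i *: iX i.

Definition qd_cartan_datum (p : I -> bool) (B : I -> I -> int) : Prop :=
  [/\ forall i j, B i j = B j i,
      forall i, B i i = 2 * qd_dI B i /\ 0 < qd_dI B i,
      forall i j, i != j -> (B i i %| 2 * B i j)%Z /\ qd_aI B i j <= 0,
      forall i j, i != j -> p i -> (2 %| qd_aI B i j)%Z
    & forall i, (qd_dI B i = (p i)%:R %[mod 2])%Z].

Definition qd_lin_indep (n : nat) (v : I -> 'rV[int]_n) : Prop :=
  forall c : I -> int, \sum_i c i *: v i = 0 -> forall i, c i = 0.

Definition qd_root_datum (B : I -> I -> int) (n : nat) (iY iX : I -> 'rV[int]_n) : Prop :=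
  qd_lin_indep iY /\ forall i j, qd_pairing (iY i) (iX j) = qd_aI B i j.

Definition qd_dominant (n : nat) (iY : I -> 'rV[int]_n) (lam : 'rV[int]_n) : Prop :=
  forall i, 0 <= qd_pairing (iY i) lam.

Definition qd_is_enhancer (p : I -> bool) (B : I -> I -> int) (n : nat)
    (iX : I -> 'rV[int]_n) (phi : (I -> int) -> 'rV[int]_n -> int) : Prop :=
  [/\ forall nu mu lam,
        (phi nu (lam + qd_rootX iX mu)%R = phi nu (qd_rootX iX mu) + phi nu lam %[mod 4])%Z,
      forall nu mu lam,
        (phi (qd_addZI nu mu) lam = phi nu lam + phi mu lam %[mod 4])%Z,
      forall i j, i != j -> (2 %| phi (qd_eI i) (iX j))%Z,
      forall i j, i != j ->
        (phi (qd_eI i) (iX j) - phi (qd_eI j) (iX i) = B i j + 2 * ((p i)%:R * (p j)%:R) %[mod 4])%Z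
    & forall i, (phi (qd_eI i) (iX i) = qd_dI B i %[mod 4])%Z].
End Defs.

(* Main.v *)
Require Import Defs.
From HB Require Import structures.
From mathcomp Require Import all_boot all_order all_algebra.
From mathcomp Require Import ring.
From Stdlib Require Import FunctionalExtensionality ClassicalEpsilon.
Import GRing.Theory Num.Theory.
Local Open Scope ring_scope.
Module MA.
Set Implicit Arguments. Unset Strict Implicit.

Section Basic.
Variable I : finType.
Variable n : nat.

Lemma sum_delta (R : comNzRingType) (f : I -> R) i :
  \sum_k ((k == i)%:R : R) * f k = f i.
Proof.
rewrite (bigD1 i) //= eqxx mul1r big1 ?addr0 // => k /negbTE ->; by rewrite mul0r.
Qed.

Lemma sumv_delta (f : I -> 'rV[int]_n) i :
  \sum_k ((k == i)%:R : int) *: f k = f i.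
Proof.
rewrite (bigD1 i) //= eqxx scale1r big1 ?addr0 // => k /negbTE ->; by rewrite scale0r.
Qed.

Lemma rX_eI (iX : I -> 'rV[int]_n) i : qd_rootX iX (qd_eI i) = iX i.
Proof. exact: sumv_delta. Qed.

Lemma rX_add (iX : I -> 'rV[int]_n) nu mu :
  qd_rootX iX (qd_addZI nu mu) = qd_rootX iX nu + qd_rootX iX mu.
Proof. by rewrite /qd_rootX -big_split; apply: eq_bigr => k _; rewrite scalerDl. Qed.

Lemma rX_0 (iX : I -> 'rV[int]_n) : qd_rootX iX (fun _ => 0) = 0.
Proof. by rewrite /qd_rootX big1 // => k _; rewrite scale0r. Qed.

Lemma rX_inj (iX : I -> 'rV[int]_n) : qd_lin_indep iX ->
  forall a b, qd_rootX iX a = qd_rootX iX b -> a = b.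
Proof.
move=> H a b e; apply: functional_extensionality => k.
apply/eqP; rewrite -subr_eq0; apply/eqP.
apply: (H (fun k => a k - b k)).
rewrite (eq_bigr (fun k => a k *: iX k - b k *: iX k)); last by move=> j _; rewrite scalerBl.
by rewrite sumrB -/(qd_rootX iX a) e subrr.
Qed.

Lemma pairingD (y x1 x2 : 'rV[int]_n) :
  qd_pairing y (x1 + x2) = qd_pairing y x1 + qd_pairing y x2.
Proof. by rewrite /qd_pairing -big_split; apply: eq_bigr => k _; rewrite mxE mulrDr. Qed.

Lemma pairingN (y x : 'rV[int]_n) : qd_pairing y (- x) = - qd_pairing y x.
Proof. by rewrite /qd_pairing -sumrN; apply: eq_bigr => k _; rewrite mxE mulrN. Qed.

Lemma pairingZl (c : int) (y x : 'rV[int]_n) :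
  qd_pairing (c *: y) x = c * qd_pairing y x.
Proof. by rewrite /qd_pairing mulr_sumr; apply: eq_bigr => k _; rewrite mxE mulrA. Qed.

Lemma pairing_rX (iX : I -> 'rV[int]_n) y nu :
  qd_pairing y (qd_rootX iX nu) = \sum_k nu k * qd_pairing y (iX k).
Proof.
rewrite /qd_pairing /qd_rootX.
under eq_bigr => j _ do rewrite summxE mulr_sumr.
rewrite exchange_big /=; apply: eq_bigr => k _; rewrite mulr_sumr.
by apply: eq_bigr => j _; rewrite mxE; ring.
Qed.
End Basic.
End MA.
Import MA.
Module MB.
Set Implicit Arguments. Unset Strict Implicit.

Notation Z4 := 'Z_4.
Definition t4 (z : int) : Z4 := z%:~R.

Lemma t4_4 : (4%:R : Z4) = 0. Proof. by apply/val_inj. Qed.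

Lemma t4_mod (a : int) : t4 a = t4 (a %% 4)%Z.
Proof.
rewrite {1}(divz_eq a 4) /t4 intrD intrM.
have -> : ((4:int)%:~R : Z4) = 0 by rewrite -t4_4.
by rewrite mulr0 add0r.
Qed.

Lemma mod4P (a b : int) : (a = b %[mod 4])%Z <-> t4 a = t4 b.
Proof.
split; first by move=> H; rewrite t4_mod H -t4_mod.
rewrite (t4_mod a) (t4_mod b).
have ha := modz_ge0 a (isT : (4:int) != 0).
have hb := modz_ge0 b (isT : (4:int) != 0).
have la := ltz_pmod a (isT : (0:int) < 4).
have lb := ltz_pmod b (isT : (0:int) < 4).
move: ha hb la lb.
case: (a %% 4)%Z => // m; case: (b %% 4)%Z => // k _ _ lm lk.
rewrite /t4 => /(congr1 val).
rewrite -!pmulrn.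
by case: m lm => [|[|[|[|]]]] // _; case: k lk => [|[|[|[|]]]].
Qed.

Section Enh.
Variables (I : finType) (p : I -> bool) (B : I -> I -> int) (n : nat)
    (iY iX : I -> 'rV[int]_n) (phi : (I -> int) -> 'rV[int]_n -> int).
Hypothesis Hphi : qd_is_enhancer p B iX phi.

Lemma A1 x lam mu : t4 (phi x (lam + qd_rootX iX mu)) = t4 (phi x (qd_rootX iX mu)) + t4 (phi x lam).
Proof. case: Hphi => h _ _ _ _; by rewrite /t4 -!intrD; apply/mod4P. Qed.

Lemma phi_add_scale x lam c k :
  t4 (phi x (lam + c *: iX k)) = t4 (phi x lam) + t4 c * t4 (phi x (iX k)).
Proof.
elim/int_rec: c lam => [|m IH|m IH] lam.
- by rewrite scale0r addr0 /t4 mul0r addr0.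
- have -> : lam + (m.+1)%:Z *: iX k = (lam + m%:Z *: iX k) + qd_rootX iX (qd_eI k).
    have hs : (m.+1)%:Z = m%:Z + 1 by rewrite -addn1 PoszD.
    by rewrite rX_eI hs scalerDl scale1r addrA.
  have hs : (m.+1)%:Z = m%:Z + 1 by rewrite -addn1 PoszD.
  rewrite A1 IH rX_eI /t4 hs intrD; ring.
- have e : lam + (- m%:Z) *: iX k = (lam + (- (m.+1)%:Z) *: iX k) + qd_rootX iX (qd_eI k).
    have hs : - (m.+1)%:Z = - m%:Z - 1 by rewrite -addn1 PoszD opprD.
    by rewrite rX_eI hs scalerDl scaleN1r -addrA subrK.
  move: (IH lam); rewrite e A1 rX_eI => h.
  have -> : t4 (phi x (lam + - (m.+1)%:Z *: iX k)) = t4 (phi x lam) + t4 (- m%:Z) * t4 (phi x (iX k)) - t4 (phi x (iX k)).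
    by rewrite -h; ring.
  have hs : - (m.+1)%:Z = - m%:Z - 1 by rewrite -addn1 PoszD opprD.
  rewrite /t4 hs intrD intrN; ring.
Qed.

Lemma phi_rX_seq x (nu : I -> int) s lam :
  t4 (phi x (lam + \sum_(k <- s) nu k *: iX k)) =
  t4 (phi x lam) + \sum_(k <- s) t4 (nu k) * t4 (phi x (iX k)).
Proof.
elim: s lam => [|a s IH] lam; first by rewrite !big_nil !addr0.
rewrite !big_cons (addrC (nu a *: iX a)) addrA phi_add_scale IH; ring.
Qed.

Lemma phi_rX x lam nu :
  t4 (phi x (lam + qd_rootX iX nu)) = t4 (phi x lam) + \sum_k t4 (nu k) * t4 (phi x (iX k)).
Proof. exact: phi_rX_seq. Qed.

End Enh.
End MB.
Import MB.
Module MC.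
Set Implicit Arguments. Unset Strict Implicit.

Lemma z4_zero (a b w : Z4) : a - b = 4%:R * w -> a = b.
Proof. by move=> h; apply/eqP; rewrite -subr_eq0 h t4_4 mul0r. Qed.

Lemma t4_2mod x : t4 (2 * x) = t4 (2 * (x %% 2)%Z).
Proof.
apply: (@z4_zero _ _ (t4 (x %/ 2)%Z)).
rewrite {1}(divz_eq x 2) /t4 !rmorphM /= !rmorphD /= !rmorphM /=.


ring.
Qed.

Lemma t4_2eq x y : (x = y %[mod 2])%Z -> t4 (2 * x) = t4 (2 * y).
Proof. by move=> h; rewrite t4_2mod h -t4_2mod. Qed.

Section Cartan.
Variables (I : finType) (p : I -> bool) (B : I -> I -> int).
Hypothesis HC : qd_cartan_datum p B.

Lemma dA i k : qd_dI B i * qd_aI B i k = B i k.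
Proof.
case: HC => _ Hd Ha _ _.
have [e d0] := Hd i.
have nz : B i i != 0 by rewrite e mulf_neq0 // lt0r_neq0.
case: (eqVneq i k) => [<-|ne].
  by rewrite /qd_aI mulzK // e mulrC.
have [dv _] := Ha i k ne.
have h := divzK dv; rewrite -/(qd_aI B i k) e in h.
apply: (@mulfI _ 2) => //; rewrite -h; ring.
Qed.

Lemma t4_2d i : t4 (2 * qd_dI B i) = t4 (2 * (p i)%:R).
Proof. case: HC => _ _ _ _ h; exact: t4_2eq. Qed.
End Cartan.

Section Pair.
Variables (I : finType) (p : I -> bool) (B : I -> I -> int) (n : nat)
    (iX : I -> 'rV[int]_n) (phi : (I -> int) -> 'rV[int]_n -> int).
Hypothesis HC : qd_cartan_datum p B.
Hypothesis Hphi : qd_is_enhancer p B iX phi.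

Lemma pair_term i k :
  t4 (phi (qd_eI i) (iX k)) - t4 (phi (qd_eI k) (iX i)) + t4 (B i k)
  = 2%:R * t4 (p i)%:R * t4 (p k)%:R.
Proof.
case: (eqVneq i k) => [<-|ne].
  have e : B i i = 2 * qd_dI B i by case: HC => _ Hd _ _ _; case: (Hd i).
  rewrite subrr add0r e (t4_2d HC).
  by case: (p i); rewrite /t4 /=; ring.
have [HB _ _ _ _] := HC.
case: Hphi => _ _ _ H4 _.
have := H4 k i; rewrite eq_sym ne => /(_ isT) /mod4P.
rewrite /t4 !rmorphB /= !rmorphD /= !rmorphM /= => h.
apply: (@z4_zero _ _ (- (t4 (p i)%:R * t4 (p k)%:R))).
rewrite /t4 HB.
have -> : ((phi (qd_eI i) (iX k))%:~R : Z4) = (phi (qd_eI k) (iX i))%:~R - ((B k i)%:~R + 2%:~R * ((p k)%:R%:~R * (p i)%:R%:~R)).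
  by rewrite -h; ring.
ring.
Qed.

Lemma parZ_eI i : qd_parZ p (qd_eI i) = (p i)%:R.
Proof. by rewrite /qd_parZ /qd_eI sum_delta; case: (p i). Qed.

Lemma t4_par nu :
  t4 (2 * qd_parZ p nu) = 2%:R * \sum_k t4 (nu k) * t4 (p k)%:R.
Proof.
rewrite /qd_parZ -t4_2mod /t4 rmorphM rmorph_sum /=.
congr (_ * _); apply: eq_bigr => k _; by rewrite rmorphM.
Qed.
End Pair.
End MC.
Import MC.
Module MD.
Set Implicit Arguments. Unset Strict Implicit.

Section Main.
Variables (I : finType) (p : I -> bool) (B : I -> I -> int) (n : nat)
    (iY iX : I -> 'rV[int]_n) (phi : (I -> int) -> 'rV[int]_n -> int).
Hypothesis HC : qd_cartan_datum p B.
Hypothesis HR : qd_root_datum B iY iX.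
Hypothesis Hphi : qd_is_enhancer p B iX phi.
Variables lam lam' : 'rV[int]_n.

Definition Sf (mu : I -> int) : int :=
  \sum_k \sum_l mu k * mu l * B k l - \sum_k mu k * B k k.
Definition Qf mu := (Sf mu %/ 2)%Z.

Lemma split_delta (a : I -> int) (f : I -> int) i :
  \sum_k (a k + (k == i)%:R) * f k = \sum_k a k * f k + f i.
Proof.
rewrite -(sum_delta f i) -big_split; apply: eq_bigr => k _ /=; ring.
Qed.

Lemma Sf_step mu i : Sf (qd_addZI mu (qd_eI i)) = 2 * (\sum_k mu k * B k i) + Sf mu.
Proof.
have [HB _ _ _ _] := HC.
rewrite /Sf /qd_addZI /qd_eI.
have inner k : \sum_l (mu k + (k==i)%:R) * (mu l + (l==i)%:R) * B k l
   = (mu k + (k==i)%:R) * (\sum_l mu l * B k l + B k i).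
  rewrite -(split_delta mu (B k) i) mulr_sumr; apply: eq_bigr => l _ /=; ring.
have inner0 k : \sum_l mu k * mu l * B k l = mu k * \sum_l mu l * B k l.
  by rewrite mulr_sumr; apply: eq_bigr => l _ /=; ring.
rewrite (eq_bigr _ (fun k _ => inner k)) (eq_bigr _ (fun k _ => inner0 k)).
have -> : \sum_k (mu k + (k==i)%:R) * (\sum_l mu l * B k l + B k i)
   = \sum_k mu k * (\sum_l mu l * B k l + B k i) + (\sum_l mu l * B i l + B i i)
   by exact: (split_delta mu (fun k => \sum_l mu l * B k l + B k i)).
have -> : \sum_k (mu k + (k==i)%:R) * B k k = \sum_k mu k * B k k + B i i
   by exact: (split_delta mu (fun k => B k k)).
have -> : \sum_k mu k * (\sum_l mu l * B k l + B k i)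
   = \sum_k mu k * (\sum_l mu l * B k l) + \sum_k mu k * B k i.
  by rewrite -big_split; apply: eq_bigr => k _ /=; ring.
have -> : \sum_l mu l * B i l = \sum_k mu k * B k i.
  by apply: eq_bigr => l _; rewrite HB.
ring.
Qed.

Lemma Qf_step mu i : Qf (qd_addZI mu (qd_eI i)) = \sum_k mu k * B k i + Qf mu.
Proof. by rewrite /Qf Sf_step mulrC divzMDl. Qed.

Definition cI k := 2 * qd_dI B k + qd_dI B k * qd_pairing (iY k) (lam - lam').
Definition Fdef (nu mu : I -> int) : int :=
  \sum_k mu k * phi (qd_eI k) lam
  - \sum_k nu k * phi (qd_eI k) (qd_rootX iX mu - lam')
  + \sum_k mu k * cI k + Qf mu.

Lemma step1 nu mu i :
  Fdef (qd_addZI nu (qd_eI i)) mu = Fdef nu mu - phi (qd_eI i) (qd_rootX iX mu - lam').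
Proof. rewrite /Fdef /qd_addZI /qd_eI split_delta; ring. Qed.

Lemma step0 : Fdef (fun _ => 0) (fun _ => 0) = 0.
Proof.
rewrite /Fdef /Qf /Sf !big1 // => k _; rewrite ?mul0r //.
by rewrite big1 // => l _; rewrite !mul0r.
Qed.


Lemma step2 nu mu i :
  t4 (Fdef nu (qd_addZI mu (qd_eI i))) =
  t4 (Fdef nu mu + phi (qd_eI i) (lam - qd_rootX iX nu) + 2 * qd_dI B i
      + qd_pairing (qd_dI B i *: iY i) (lam - qd_rootX iX nu + (qd_rootX iX mu - lam'))
      + 2 * qd_parZ p nu * qd_parZ p (qd_eI i)).
Proof.
have [HB _ _ _ _] := HC. have [_ Hpair] := HR.
set Z := qd_rootX iX mu - lam'.
set N := \sum_k nu k * phi (qd_eI k) Z.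
set S := \sum_k nu k * (p k)%:R.
set G := \sum_k nu k * phi (qd_eI k) (iX i).
set M := \sum_k mu k * B k i.
set NB := \sum_k nu k * B i k.
have Fa : \sum_k qd_addZI mu (qd_eI i) k * phi (qd_eI k) lam
    = \sum_k mu k * phi (qd_eI k) lam + phi (qd_eI i) lam
  by exact: (split_delta mu (fun k => phi (qd_eI k) lam)).
have Fb : \sum_k qd_addZI mu (qd_eI i) k * cI k = \sum_k mu k * cI k + cI i
  by exact: (split_delta mu cI).
have Fd : qd_rootX iX (qd_addZI mu (qd_eI i)) - lam' = Z + qd_rootX iX (qd_eI i)
  by rewrite rX_add addrAC.
have F1 : t4 (\sum_k nu k * phi (qd_eI k) (Z + qd_rootX iX (qd_eI i))) = t4 G + t4 N.
  rewrite /t4 !rmorph_sum -big_split /=; apply: eq_bigr => k _.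
  rewrite !rmorphM /= -mulrDr; congr (_ * _).
  by have := A1 Hphi (qd_eI k) Z (qd_eI i); rewrite /t4 rX_eI.
have F2 : t4 (phi (qd_eI i) (lam - qd_rootX iX nu))
    = t4 (phi (qd_eI i) lam) - t4 (\sum_k nu k * phi (qd_eI i) (iX k)).
  have := phi_rX Hphi (qd_eI i) (lam - qd_rootX iX nu) nu.
  rewrite subrK => ->.
  rewrite /t4 rmorph_sum /=.
  under [X in _ = _ - X]eq_bigr => k _ do rewrite rmorphM.
  ring.
have F3 : qd_pairing (qd_dI B i *: iY i) (lam - qd_rootX iX nu + Z)
    = qd_dI B i * qd_pairing (iY i) (lam - lam') - NB + M.
  rewrite pairingZl /Z.
  have -> : lam - qd_rootX iX nu + (qd_rootX iX mu - lam')
      = (lam - lam') + (- qd_rootX iX nu) + qd_rootX iX mu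
    by rewrite addrA (addrAC (lam - qd_rootX iX nu)) (addrAC lam (- qd_rootX iX nu)).
  rewrite pairingD (pairingD _ (lam - lam')) pairingN !pairing_rX.
  have e1 : qd_dI B i * \sum_k nu k * qd_pairing (iY i) (iX k) = NB.
    by rewrite mulr_sumr; apply: eq_bigr => k _; rewrite Hpair mulrCA (dA HC).
  have e2 : qd_dI B i * \sum_k mu k * qd_pairing (iY i) (iX k) = M.
    by rewrite mulr_sumr; apply: eq_bigr => k _; rewrite Hpair mulrCA (dA HC) HB.
  rewrite -e1 -e2; ring.
have F4 : t4 (\sum_k nu k * phi (qd_eI i) (iX k)) = t4 G - t4 NB + 2%:R * t4 (p i)%:R * t4 S.
  rewrite /G /NB /S /t4 !rmorph_sum /=.
  rewrite !mulr_sumr -sumrB -big_split /=; apply: eq_bigr => k _.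
  have := pair_term HC Hphi i k; rewrite /t4 !rmorphM /= => h.
  have -> : ((phi (qd_eI i) (iX k))%:~R : Z4) = (phi (qd_eI k) (iX i))%:~R - (B i k)%:~R + 2%:R * ((p i)%:R)%:~R * ((p k)%:R)%:~R
    by rewrite -h; ring.
  ring.
have F5 : t4 (2 * qd_parZ p nu * qd_parZ p (qd_eI i)) = 2%:R * t4 S * t4 (p i)%:R.
  rewrite (parZ_eI p) /t4 rmorphM /= -/(t4 _) t4_par /S /t4 rmorph_sum /=.
  congr (_ * _ * _); apply: eq_bigr => k _; by rewrite rmorphM.
rewrite /Fdef /Qf -/(Qf _) Qf_step Fa Fb Fd.
move: F1 F2 F4 F5; rewrite /cI F3 /t4 => F1 F2 F4 F5.
rewrite !rmorphD /= F5 !rmorphN /= F1 F2 F4 !rmorphM /=.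
ring.
Qed.

End Main.
End MD.
Import MD.
Theorem mainTheorem19 (I : finType) (p : I -> bool) (B : I -> I -> int) (n : nat)
    (iY iX : I -> 'rV[int]_n) (phi : (I -> int) -> 'rV[int]_n -> int)
    (Hodd : exists i, p i) (HC : qd_cartan_datum p B) (HR : qd_root_datum B iY iX)
    (HXreg : qd_lin_indep iX) (Hphi : qd_is_enhancer p B iX phi)
    (lam lam' : 'rV[int]_n) (Hlam : qd_dominant iY lam) (Hlam' : qd_dominant iY lam') :
  exists kappa : 'rV[int]_n -> 'rV[int]_n -> int,
    (forall (i : I) (nu mu : I -> nat),
       let zeta := lam - qd_rootX iX (qd_natZ nu) in
       let zeta' := qd_rootX iX (qd_natZ mu) - lam' in
       (kappa (zeta - iX i)%R zeta' = kappa zeta zeta' - phi (qd_eI i) zeta' %[mod 4])%Z /\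
       (kappa zeta (zeta' + iX i)%R =
          kappa zeta zeta' + phi (qd_eI i) zeta + 2 * qd_dI B i
          + qd_pairing (qd_dI B i *: iY i) (zeta + zeta')%R
          + 2 * qd_parZ p (qd_natZ nu) * qd_parZ p (qd_eI i) %[mod 4])%Z)
    /\ (kappa lam (- lam')%R = 0 %[mod 4])%Z.
Proof.
pose pickN (x : 'rV[int]_n) := epsilon (inhabits (fun _ : I => (0:int)))
   (fun nu => x = lam - qd_rootX iX nu).
pose pickM (y : 'rV[int]_n) := epsilon (inhabits (fun _ : I => (0:int)))
   (fun mu => y = qd_rootX iX mu - lam').
have pN nu : pickN (lam - qd_rootX iX nu) = nu.
  have h := epsilon_spec (inhabits (fun _ : I => (0:int)))
     (fun nu0 => lam - qd_rootX iX nu = lam - qd_rootX iX nu0) (ex_intro _ nu erefl).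
  symmetry; apply: (rX_inj HXreg); apply: oppr_inj; exact: (addrI _ h).
have pM mu : pickM (qd_rootX iX mu - lam') = mu.
  have h := epsilon_spec (inhabits (fun _ : I => (0:int)))
     (fun mu0 => qd_rootX iX mu - lam' = qd_rootX iX mu0 - lam') (ex_intro _ mu erefl).
  symmetry; apply: (rX_inj HXreg); exact: (addIr _ h).
exists (fun x y => Fdef B iY iX phi lam lam' (pickN x) (pickM y)).
split.
  move=> i nu mu zeta zeta'; rewrite /zeta /zeta'.
  have e1 : lam - qd_rootX iX (qd_natZ nu) - iX i
      = lam - qd_rootX iX (qd_addZI (qd_natZ nu) (qd_eI i))
    by rewrite rX_add rX_eI opprD addrA.
  have e2 : qd_rootX iX (qd_natZ mu) - lam' + iX i
      = qd_rootX iX (qd_addZI (qd_natZ mu) (qd_eI i)) - lam'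
    by rewrite rX_add rX_eI addrAC.
  rewrite e1 e2 !pN !pM; split.
    by rewrite step1.

  apply/mod4P; exact: (step2 HC HR Hphi).
have e3 : lam = lam - qd_rootX iX (fun _ => 0) by rewrite rX_0 subr0.
have e4 : - lam' = qd_rootX iX (fun _ => 0) - lam' by rewrite rX_0 sub0r.
have h0 := pN (fun _ => 0); rewrite rX_0 subr0 in h0.
have h1 := pM (fun _ => 0); rewrite rX_0 sub0r in h1.
by rewrite /= h0 h1 step0.
Qed.
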